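(* Under the setup in the context, for every arm $j\in\{1,\dots,K\}$ and every $\delta>0$, $$\bigcup_{i=1}^{\infty}\bigl\{|\tilde\mu_{j,i}-\mu_j|>U(i,\delta)\bigr\}\;\subseteq\;\bigcup_{i=1}^{\infty}\bigl\{|\hat\mu_{j,i}-\mu_j|>U'(i,\delta)\bigr\}.$$
   Context: There are $K$ arms. For each arm $j\in[K]=\{1,\dots,K\}$, the rewards $r_{j,1},r_{j,2},\dots$ are i.i.d. real random variables with values in a fixed interval $[a,b]$ and mean $\mu_j$, and they are $\sigma^2$-subgaussian in the sense that $\mathbb P(|r_{j,k}-\mu_j|>t)\le 2e^{-t^2/(2\sigma^2)}$ for all $t>0$. Rewards of different arms are independent. Fix integers $B\ge 1$ and $\alpha\ge 2$, and set $t_i=\alpha^i$ for $i\ge1$. For $\delta>0$ and $i\ge 1$ define $$U'(i,\delta)=\sigma\sqrt{\frac{2\log(4Kt_i^2/\delta)}{t_i}},$$ and define $U(i,\delta)$ recursively by $U(0,\delta)=b-a$ and $$U(i,\delta)=\frac{1}{2^B}\bigl[U'(i,\delta)+U(i-1,\delta)\bigr]+U'(i,\delta)\quad(i\ge1).$$ Let $\hat\mu_{j,i}=\frac1{t_i}\sum_{k=1}^{t_i}r_{j,k}$ be the empirical mean of the first $t_i$ rewards of arm $j$. Quantizer: for a real interval $[\ell,u]$, divide it into $2^B$ consecutive bins of equal width $(u-\ell)/2^B$; for any $x\in\mathbb R$ (whether or not $x\in[\ell,u]$), $Q_{[\ell,u]}(x)$ denotes the midpoint of a bin whose midpoint is nearest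 to $x$ (so $|Q_{[\ell,u]}(x)-x|\le (u-\ell)/2^{B+1}$ whenever $x\in[\ell,u]$). Decoded estimates: $\tilde\mu_{j,0}$ is drawn uniformly from $[a,b]$, and for $i\ge1$, $$\tilde\mu_{j,i}=Q_{I_{j,i}}(\hat\mu_{j,i}),\qquad I_{j,i}=\bigl[\tilde\mu_{j,i-1}-U(i-1,\delta)-U'(i,\delta),\ \tilde\mu_{j,i-1}+U(i-1,\delta)+U'(i,\delta)\bigr].$$ *)

(* Defs.v *)
From HB Require Import structures.
From mathcomp Require Import all_boot all_order all_algebra.
From mathcomp Require Import all_classical all_reals all_analysis.
Set Implicit Arguments. Unset Strict Implicit. Unset Printing Implicit Defensive.
Import Order.TTheory GRing.Theory Num.Theory.
Local Open Scope classical_set_scope.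
Local Open Scope ring_scope.

Section Defs.
Variable R : realType.

Definition tt (alpha i : nat) : nat := (alpha ^ i)%N.

Definition Uprime (K alpha : nat) (sigma delta : R) (i : nat) : R :=
  sigma * Num.sqrt (2 * ln (4 * K%:R * ((tt alpha i)%:R ^+ 2) / delta)
                    / (tt alpha i)%:R).

Fixpoint Ubound (K alpha B : nat) (a b sigma delta : R) (i : nat) : R :=
  match i with
  | 0 => b - a
  | i'.+1 => (Uprime K alpha sigma delta i'.+1
               + Ubound K alpha B a b sigma delta i') / (2 ^+ B)
             + Uprime K alpha sigma delta i'.+1
  end.

Definition bin_mid (B : nat) (l u : R) (k : nat) : R :=
  l + (k%:R + 2^-1) * ((u - l) / 2 ^+ B).

(* Q is a B-bit quantizer: Q l u x is the midpoint of a bin of [l,u] whose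
   midpoint is nearest to x (any tie-breaking rule allowed). *)
Definition is_quantizer (B : nat) (Q : R -> R -> R -> R) : Prop :=
  forall l u x, exists2 k : nat, (k < 2 ^ B)%N &
    Q l u x = bin_mid B l u k /\
    forall k' : nat, (k' < 2 ^ B)%N -> `|Q l u x - x| <= `|bin_mid B l u k' - x|.

(* empirical mean of the first t_i rewards; rew k is the (k+1)-th reward *)
Definition hatmu (alpha : nat) (rew : nat -> R) (i : nat) : R :=
  (\sum_(k < tt alpha i) rew k) / (tt alpha i)%:R.

Fixpoint tildemu (K alpha B : nat) (a b sigma delta : R)
    (Q : R -> R -> R -> R) (rew : nat -> R) (t0 : R) (i : nat) : R :=
  match i with
  | 0 => t0
  | i'.+1 =>
      let p := tildemu K alpha B a b sigma delta Q rew t0 i' in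
      let w := Ubound K alpha B a b sigma delta i'
               + Uprime K alpha sigma delta i'.+1 in
      Q (p - w) (p + w) (hatmu alpha rew i'.+1)
  end.

End Defs.

Definition mutually_independent d (T : measurableType d) (R : realType)
    (P : probability T R) (I : eqType) (X : I -> T -> R) : Prop :=
  forall (s : seq I) (Bs : I -> set R), uniq s ->
    (forall i, measurable (Bs i)) ->
    P (\bigcap_(i in [set` s]) (X i @^-1` Bs i)) =
    (\prod_(i <- s) P (X i @^-1` Bs i))%E.

(* Main.v *)
Require Import Defs.
From HB Require Import structures.
From mathcomp Require Import all_boot all_order all_algebra.
From mathcomp Require Import all_classical all_reals all_analysis.
Import Order.TTheory GRing.Theory Num.Theory.
Local Open Scope classical_set_scope.
Local Open Scope ring_scope.
From mathcomp Require Import ring lra.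
Lemma exists_bin (R: realFieldType) (N:nat) (y:R): (0<N)%N -> 0<=y<=N%:R ->
  exists2 k:nat, (k<N)%N & k%:R <= y <= k%:R+1.
Proof.
elim: N => // -[|N] IH _ /andP[y0 yN].
  by exists 0%N => //; rewrite add0r y0.
case: (lerP y N.+1%:R) => h.
  by have [k kN hk] := IH isT (introT andP (conj y0 h)); exists k => //; apply: ltnW.
exists N.+1 => //; rewrite (ltW h) /=.
by rewrite -natr1 in yN.
Qed.
Lemma qstep (R : realType) (B : nat) (Q : R -> R -> R -> R) (p w x : R) :
  is_quantizer B Q -> `|x - p| <= w ->
  `|Q (p - w) (p + w) x - x| <= w / 2 ^+ B.
Proof.
move=> hQ hx.
have w0 : 0 <= w by apply: le_trans hx.
have [k kN [-> hmin]] := hQ (p - w) (p + w) x.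
have N0 : 0 < (2:R) ^+ B by apply: exprn_gt0.
have N0' : (0 < 2 ^ B)%N by rewrite expn_gt0.
have eN : (2 ^ B)%:R = (2:R) ^+ B by rewrite natrX.
case: (ler0P w) => wp.
  have w00 : w = 0 by apply/eqP; rewrite eq_le wp w0.
  move: hx hmin; rewrite w00 normr_le0 subr_eq0 => /eqP -> hmin.
  have := hmin 0%N N0'.
  rewrite /bin_mid !subr0 !addr0 subrr mul0r mulr0 addr0 subrr normr0.
  by [].
set h := (p + w - (p - w)) / 2 ^+ B.
have hE : h = 2 * w / 2 ^+ B by rewrite /h; congr (_ / _); ring.
have hp : 0 < h by rewrite hE divr_gt0 // mulr_gt0.
set y := (x - (p - w)) / h.
have xE : x = (p - w) + y * h by rewrite /y divfK ?gt_eqF //; ring.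
have /andP[x1 x2] : - w <= x - p <= w by rewrite -ler_norml.
have y0 : 0 <= y by rewrite /y divr_ge0 //; lra.
have yN : y <= (2 ^ B)%:R.
  rewrite /y ler_pdivrMr // eN hE mulrCA divff ?gt_eqF // mulr1; lra.
have [k' kN' /andP[k1 k2]] := @exists_bin R _ y N0' (introT andP (conj y0 yN)).
apply: (le_trans (hmin k' kN')).
rewrite /bin_mid -/h xE.
have -> : p - w + (k'%:R + 2^-1) * h - (p - w + y * h) = (k'%:R + 2^-1 - y) * h by ring.
rewrite normrM (gtr0_norm hp).
have -> : w / 2 ^+ B = 2^-1 * h by rewrite hE; field; rewrite gt_eqF.
apply: ler_wpM2r; first exact: ltW.
rewrite ler_norml; apply/andP; split; lra.
Qed.
Lemma hat_ab (R : realType) alpha (f : nat -> R) a b i :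
  (2 <= alpha)%N -> (forall k, a <= f k <= b) -> a <= hatmu alpha f i <= b.
Proof.
move=> a2 hf.
have n0 : (0 < tt alpha i)%N by rewrite /tt expn_gt0; case: alpha a2.
have n0' : (0:R) < (tt alpha i)%:R by rewrite ltr0n.
rewrite /hatmu ler_pdivlMr // ler_pdivrMr //.
have e : forall c : R, c * (tt alpha i)%:R = \sum_(k < tt alpha i) c.
  by move=> c; rewrite sumr_const card_ord mulr_natr.
rewrite !e; apply/andP; split; apply: ler_sum => k _; by case/andP: (hf k).
Qed.

Lemma step2 (R : realType) (B : nat) (Q : R -> R -> R -> R) (p wv x mu u : R) :
  is_quantizer B Q -> `|x - p| <= wv -> `|x - mu| <= u ->
  `|Q (p - wv) (p + wv) x - mu| <= wv / 2 ^+ B + u.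
Proof.
move=> hQ h1 h2.
have -> : Q (p - wv) (p + wv) x - mu = (Q (p - wv) (p + wv) x - x) + (x - mu) by ring.
apply: (le_trans (ler_normD _ _)); apply: lerD => //; exact: qstep.
Qed.
Lemma tildemuS (R : realType) K alpha B (a b sigma delta : R) Q rew t0 n :
  tildemu K alpha B a b sigma delta Q rew t0 n.+1 =
  let p := tildemu K alpha B a b sigma delta Q rew t0 n in
  let w := Ubound K alpha B a b sigma delta n + Uprime K alpha sigma delta n.+1 in
  Q (p - w) (p + w) (hatmu alpha rew n.+1).
Proof. by []. Qed.
Lemma UboundS (R : realType) K alpha B (a b sigma delta : R) n :
  Ubound K alpha B a b sigma delta n.+1 =
  (Ubound K alpha B a b sigma delta n + Uprime K alpha sigma delta n.+1) / 2 ^+ B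
  + Uprime K alpha sigma delta n.+1.
Proof. by rewrite /= [Uprime _ _ _ _ _ + _]addrC. Qed.

Theorem lemma1 (R : realType) (d : measure_display) (T : measurableType d)
    (P : probability T R) (K : nat) (a b sigma : R) (mu : 'I_K -> R)
    (r : 'I_K -> nat -> T -> R) (tilde0 : 'I_K -> T -> R)
    (B alpha : nat) (Q : R -> R -> R -> R) :
  a < b -> 0 < sigma -> (1 <= B)%N -> (2 <= alpha)%N ->
  (* rewards: measurable, values in [a,b], mean mu_j, sigma^2-subgaussian,
     identically distributed within each arm, all mutually independent *)
  (forall j k, measurable_fun setT (r j k)) ->
  (forall j k w, a <= r j k w <= b) ->
  (forall j k, (\int[P]_w (r j k w)%:E = (mu j)%:E)%E) ->
  (forall j k (t : R), 0 < t ->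
     (P [set w | (t < `|r j k w - mu j|)%R]
       <= ((2 * expR (- (t ^+ 2) / (2 * sigma ^+ 2)))%R)%:E)%E) ->
  (forall j k (A : set R), measurable A ->
     P (r j k @^-1` A) = P (r j 0%N @^-1` A)) ->
  mutually_independent P (fun jk : 'I_K * nat => r jk.1 jk.2) ->
  (* tilde mu_{j,0} uniform on [a,b] *)
  (forall j, measurable_fun setT (tilde0 j)) ->
  (forall j w, a <= tilde0 j w <= b) ->
  (forall j (A : set R), measurable A ->
     P (tilde0 j @^-1` A)
     = (lebesgue_measure (A `&` `[a, b]) * ((b - a)^-1)%:E)%E) ->
  is_quantizer B Q ->
  forall (j : 'I_K) (delta : R), 0 < delta ->
  \bigcup_(i in [set i : nat | (0 < i)%N])
     [set w | Ubound K alpha B a b sigma delta i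
              < `|tildemu K alpha B a b sigma delta Q (r j ^~ w) (tilde0 j w) i
                  - mu j|]
  `<=`
  \bigcup_(i in [set i : nat | (0 < i)%N])
     [set w | Uprime K alpha sigma delta i
              < `|hatmu alpha (r j ^~ w) i - mu j|].
Proof.
Proof.
move=> ab s0 B1 a2 _ rab _ _ _ _ _ t0ab _ hQ j delta d0 w [i /= i0 Hi].
apply: contrapT => Hno.
have hb : forall n, (0 < n)%N -> `|hatmu alpha (r j ^~ w) n - mu j|
    <= Uprime K alpha sigma delta n.
  move=> n n0; rewrite leNgt; apply/negP => hn; apply: Hno; by exists n.
have U'0 : forall n, 0 <= Uprime K alpha sigma delta n.
  by move=> n; rewrite /Uprime mulr_ge0 ?sqrtr_ge0 // ltW.
have inv : forall n, `|tildemu K alpha B a b sigma delta Q (r j ^~ w) (tilde0 j w) n.+1 - mu j|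
    <= Ubound K alpha B a b sigma delta n.+1.
  elim=> [|n IH].
    rewrite /= [Uprime _ _ _ _ _ + (b - a)]addrC.
    apply: step2 => //; last exact: hb.
    have := @hat_ab R alpha _ a b 1 a2 (fun k => rab j k w).
    have := t0ab j w.
    move=> /andP[h1 h2] /andP[h3 h4].
    have := U'0 1%N.
    rewrite ler_norml; move=> h5; apply/andP; split; lra.
  set p := tildemu K alpha B a b sigma delta Q (r j ^~ w) (tilde0 j w) n.+1 in IH *.
  rewrite tildemuS -/p [X in _ <= X]UboundS; cbv zeta.
  apply: step2 => //; last exact: hb.
  have -> : hatmu alpha (r j ^~ w) n.+2 - tildemu K alpha B a b sigma delta Q (r j ^~ w) (tilde0 j w) n.+1
    = (hatmu alpha (r j ^~ w) n.+2 - mu j) - (tildemu K alpha B a b sigma delta Q (r j ^~ w) (tilde0 j w) n.+1 - mu j) by ring.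
  apply: (le_trans (ler_normB _ _)); rewrite addrC; apply: lerD => //; exact: hb.
move: Hi; case: i i0 => // n _; rewrite ltNge inv //.
Qed.
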